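(* Let $H$ be an admissible Hamiltonian with vector field $f$ and Hessian $\mathcal H$, and let $g=J\nabla K$ be associated to $f$ via $B$, with $\mathcal K=\nabla^2K=B\mathcal H$. Then for all $x$: $$g'(x)g(x)=f'(x)f(x),\qquad (g'(x))^2=(f'(x))^2,$$ $$J(x)\mathcal H\,J(x)\mathcal K=J(x)\mathcal K\,J(x)\mathcal H,\qquad (J(x)\mathcal H)^2=(J(x)\mathcal K)^2,\qquad (\mathcal HJ(x))^2=(\mathcal KJ(x))^2.$$
   Context: Fix an integer $n\ge 2$. Points of $\mathbb R^{2n}$ are $x=(x_1,\dots,x_{2n})^{T}$; write $u=(x_1,\dots,x_n)^T$. Let $X(u)$ be the $n\times n$ matrix with entries $X(u)_{ij}=x_{k}$ where $k\in\{1,\dots,n\}$, $k\equiv i+j-1 \pmod n$, and let $J(x)=\begin{pmatrix}0&X(u)\\-X(u)&0\end{pmatrix}$. Let $\mathcal P$ be the $n\times n$ cyclic shift matrix ($\mathcal P_{i,i+1}=1$ for $1\le i\le n-1$, $\mathcal P_{n,1}=1$, all other entries $0$) and $A=\begin{pmatrix}\mathcal P&0\\0&\mathcal P\end{pmatrix}$. An admissible Hamiltonian is a homogeneous quadratic form $H(x)=\tfrac12 x^T\mathcal H x$ with a constant symmetric matrix $\mathcal H=\nabla^2H$ satisfying $A\mathcal H=\mathcal H A^T$; its Hamiltonian vector field is $f(x)=J(x)\nabla H(x)$ and $f'(x)$ denotes the Jacobi matrix of $f$. Associated vector fields: let $B=\sum_{i=0}^{n-1}\alpha_iA^i$ with $\alpha_i\in\mathbb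 C$ and $B^2=I$. If $H$ is an admissible Hamiltonian with vector field $f$, put $K(x)=\tfrac12 x^T B\mathcal H x$ (so $\nabla K=B\nabla H$) and $g(x)=J(x)\nabla K(x)=B^Tf(x)$; $g$ is said to be associated to $f$ via $B$. *)

(* Defs.v *)
(* Scalars: algC (algebraic complex numbers); real data is
   expressed by requiring entries to be in Num.real. Indices are 0-based. *)
From HB Require Import structures.
From mathcomp Require Import all_boot all_order all_algebra all_field.
Set Implicit Arguments. Unset Strict Implicit. Unset Printing Implicit Defensive.
Import Order.TTheory GRing.Theory Num.Theory.
Local Open Scope ring_scope.

(* X(u)_{ij} = x_k with k = i+j-1 mod n (1-based), i.e. k = (i+j) mod n 0-based *)
Definition Xmat (n : nat) (x : 'cV[algC]_(n + n)) : 'M[algC]_n :=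
  \matrix_(i < n, j < n) \sum_(k < n | k == ((i + j) %% n)%N :> nat) (usubmx x) k 0.

Definition Jmat (n : nat) (x : 'cV[algC]_(n + n)) : 'M[algC]_(n + n) :=
  block_mx 0 (Xmat x) (- Xmat x) 0.

Definition Pshift (n : nat) : 'M[algC]_n :=
  \matrix_(i < n, j < n) (((j : nat) == ((i + 1) %% n)%N) %:R).

Definition Amat (n : nat) : 'M[algC]_(n + n) := block_mx (Pshift n) 0 0 (Pshift n).

Definition admissible (n : nat) (H : 'M[algC]_(n + n)) : Prop :=
  (forall i j, H i j \is Num.real) /\ H^T = H /\ Amat n *m H = H *m (Amat n)^T.

Definition realvec (n : nat) (x : 'cV[algC]_(n + n)) : Prop :=
  forall i, x i 0 \is Num.real.

(* Hamiltonian vector field of the quadratic form (1/2) x^T M x : J(x) M x *)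
Definition hamvf (n : nat) (M : 'M[algC]_(n + n)) (x : 'cV[algC]_(n + n))
  : 'cV[algC]_(n + n) := Jmat x *m M *m x.

(* Jacobi matrix of the polynomial map x |-> J(x) M x. Since J is linear in x,
   d/dx_k [J(x) M x] = J(e_k) M x + J(x) M e_k. *)
Definition hamvf_jac (n : nat) (M : 'M[algC]_(n + n)) (x : 'cV[algC]_(n + n))
  : 'M[algC]_(n + n) :=
  \matrix_(i, k) ((Jmat (delta_mx k 0) *m (M *m x)) i 0) + Jmat x *m M.

Definition Bmat (n : nat) (alpha : 'I_n -> algC) : 'M[algC]_(n + n) :=
  \sum_(i < n) alpha i *: (Amat n) ^+ i.

(* Main.v *)
Require Import Defs.
From HB Require Import structures.
From mathcomp Require Import all_boot all_order all_algebra all_field.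
From mathcomp Require Import zify.
Set Implicit Arguments. Unset Strict Implicit. Unset Printing Implicit Defensive.
Import Order.TTheory GRing.Theory Num.Theory.
Local Open Scope ring_scope.

Lemma idx_lt n (i : 'I_n) m : (m %% n < n)%N.
Proof. by rewrite ltn_pmod // (leq_ltn_trans (leq0n _) (ltn_ord i)). Qed.
Definition imod n (i : 'I_n) m : 'I_n := Ordinal (idx_lt i m).

Definition Xu n (u : 'cV[algC]_n) : 'M[algC]_n :=
  \matrix_(i < n, j < n) \sum_(k < n | k == ((i + j) %% n)%N :> nat) u k 0.

Lemma XmatXu n (x : 'cV[algC]_(n + n)) : Xmat x = Xu (usubmx x).
Proof. by []. Qed.

Lemma sumXE n (u : 'cV[algC]_n) (i j : 'I_n) :
  \sum_(k < n | k == ((i + j) %% n)%N :> nat) u k 0 = u (imod i (i + j)) 0.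
Proof. apply: big_pred1 => k /=. by rewrite /pred1 /= -val_eqE. Qed.

Lemma XuE n (u : 'cV[algC]_n) i j : Xu u i j = u (imod i (i + j)) 0.
Proof. rewrite mxE; apply: big_pred1 => k /=. by rewrite /pred1 /= -val_eqE. Qed.

Lemma sum_ind n (k0 : 'I_n) (P : 'I_n -> bool) (F : 'I_n -> algC) :
  (forall k, P k = (k == k0)) -> \sum_k (P k)%:R * F k = F k0.
Proof.
move=> hP; rewrite (bigD1 k0) //= hP eqxx mul1r big1 ?addr0 // => k hk.
by rewrite hP (negbTE hk) mul0r.
Qed.

Lemma sum_indr n (k0 : 'I_n) (P : 'I_n -> bool) (F : 'I_n -> algC) :
  (forall k, P k = (k == k0)) -> \sum_k F k * (P k)%:R = F k0.
Proof. move=> hP; rewrite -(sum_ind F hP); apply: eq_bigr => k _; exact: mulrC. Qed.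

Lemma modS_inv n (i k : 'I_n) : ((i : nat) == ((k+1)%%n)%N) = (k == imod i (i + n.-1)).
Proof.
rewrite -val_eqE /=.
have n0 : (0 < n)%N by apply: leq_ltn_trans (ltn_ord i).
apply/eqP/eqP => ->; rewrite modnDml -addnA ?add1n ?addn1 prednK // modnDr modn_small //.
Qed.

Lemma PtX n (u : 'cV[algC]_n) : (Pshift n)^T *m Xu u = Xu u *m Pshift n.
Proof.
apply/matrixP => i j; rewrite !mxE.
rewrite (eq_bigr (fun k : 'I_n => ((i:nat) == ((k+1)%%n)%N)%:R * Xu u k j)); last first.
  by move=> k _; rewrite !mxE.
rewrite [RHS](eq_bigr (fun k : 'I_n => Xu u i k * ((j:nat) == ((k+1)%%n)%N)%:R)); last first.
  by move=> k _; rewrite !mxE.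
rewrite (@sum_ind _ (imod i (i + n.-1))); last first.
  by move=> k; rewrite modS_inv.
rewrite (@sum_indr _ (imod j (j + n.-1))); last first.
  by move=> k; rewrite modS_inv.
rewrite !XuE; congr (u _ 0); apply: val_inj => /=.
by rewrite modnDml modnDmr addnAC -addnA.
Qed.

Lemma XPt n (u : 'cV[algC]_n) : Xu ((Pshift n)^T *m u) = Xu u *m Pshift n.
Proof.
apply/matrixP => i j; rewrite XuE !mxE.
rewrite (eq_bigr (fun k : 'I_n => (((imod i (i + j)) : nat) == ((k+1)%%n)%N)%:R * u k 0)); last first.
  by move=> k _; rewrite !mxE.
rewrite [RHS](eq_bigr (fun k : 'I_n => Xu u i k * ((j:nat) == ((k+1)%%n)%N)%:R)); last first.
  by move=> k _; rewrite !mxE.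
rewrite (@sum_ind _ (imod (imod i (i + j)) ((imod i (i + j)) + n.-1))); last first.
  by move=> k; rewrite modS_inv.
rewrite (@sum_indr _ (imod j (j + n.-1))); last first.
  by move=> k; rewrite modS_inv.
rewrite !XuE; congr (u _ 0); apply: val_inj => /=.
by rewrite modnDml modnDmr addnA.
Qed.

Lemma Xmat_entry n (x : 'cV[algC]_(n + n)) i j : Xmat x i j = x (lshift n (imod i (i + j))) 0.
Proof. by rewrite XmatXu XuE mxE. Qed.

Lemma Jmat_lin n a (v w : 'cV[algC]_(n + n)) : Jmat (a *: v + w) = a *: Jmat v + Jmat w.
Proof.
rewrite /Jmat.
have -> : Xmat (a *: v + w) = a *: Xmat v + Xmat w.
  by apply/matrixP => i j; rewrite !mxE !sumXE !mxE.
by rewrite scale_block_mx add_block_mx scaler0 addr0 scalerN opprD.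
Qed.

Lemma Jmat0 n : Jmat (0 : 'cV[algC]_(n + n)) = 0.
Proof.
have := Jmat_lin 1 (0 : 'cV[algC]_(n + n)) 0; rewrite !scale1r addr0 => h.
by apply: (addrI (Jmat (0 : 'cV[algC]_(n + n)))); rewrite addr0 -h.
Qed.

Lemma JmatD n (v w : 'cV[algC]_(n + n)) : Jmat (v + w) = Jmat v + Jmat w.
Proof. by rewrite -{1}[v]scale1r Jmat_lin scale1r. Qed.

Lemma JmatZ n a (v : 'cV[algC]_(n + n)) : Jmat (a *: v) = a *: Jmat v.
Proof. by rewrite -[a *: v]addr0 Jmat_lin Jmat0 addr0. Qed.

Lemma Jmat_sum n m (F : 'I_m -> 'cV[algC]_(n + n)) :
  Jmat (\sum_k F k) = \sum_k Jmat (F k).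
Proof. exact: (big_morph _ (@JmatD n) (@Jmat0 n)). Qed.

Definition Lm n (w : 'cV[algC]_(n + n)) : 'M[algC]_(n + n) :=
  \matrix_(i, k) ((Jmat (delta_mx k 0) *m w) i 0).

Lemma LmE n (w v : 'cV[algC]_(n + n)) : Lm w *m v = Jmat v *m w.
Proof.
have -> : Jmat v = \sum_k v k 0 *: Jmat (delta_mx k 0).
  rewrite {1}(matrix_sum_delta v) Jmat_sum; apply: eq_bigr => k _.
  by rewrite big_ord1 JmatZ.
rewrite mulmx_suml; apply/matrixP => i l; rewrite (ord1 l) summxE mxE.
apply: eq_bigr => k _; by rewrite -scalemxAl !mxE mulrC.
Qed.

Lemma mx_ext m (A C : 'M[algC]_m) : (forall v : 'cV_m, A *m v = C *m v) -> A = C.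
Proof.
move=> h; apply/matrixP => i j.
have := congr1 (fun M : 'cV[algC]_m => M i 0) (h (delta_mx j 0)).
by rewrite -!colE !mxE.
Qed.

Lemma AtJ n (v : 'cV[algC]_(n + n)) : (Amat n)^T *m Jmat v = Jmat v *m Amat n.
Proof.
rewrite /Amat tr_block_mx !trmx0 /Jmat !mulmx_block.
rewrite !mul0mx !mulmx0 !addr0 !add0r mulmxN mulNmx !XmatXu PtX.
done.
Qed.

Lemma JAt n (v : 'cV[algC]_(n + n)) : Jmat ((Amat n)^T *m v) = Jmat v *m Amat n.
Proof.
have hu : usubmx ((Amat n)^T *m v) = (Pshift n)^T *m usubmx v.
  by rewrite /Amat tr_block_mx !trmx0 -{1}(vsubmxK v) mul_block_col col_mxKu mul0mx addr0.
rewrite /Jmat !XmatXu hu XPt /Amat mulmx_block.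
by rewrite !mul0mx !mulmx0 !addr0 !add0r mulNmx.
Qed.

Lemma mulE m (X Y : 'M[algC]_m) : X * Y = X *m Y.
Proof. by []. Qed.

Lemma pow_comm m (A C D : 'M[algC]_m) i : A *m C = C *m D -> A ^+ i *m C = C *m D ^+ i.
Proof.
move=> h; elim: i => [|i IH]; first by rewrite !expr0 mul1mx mulmx1.
by rewrite !exprS !mulE -mulmxA IH mulmxA h -mulmxA.
Qed.

Lemma sum_comm m k (alpha : 'I_k -> algC) (A C D : 'M[algC]_m) :
  A *m C = C *m D ->
  (\sum_i alpha i *: A ^+ i) *m C = C *m (\sum_i alpha i *: D ^+ i).
Proof.
move=> h; rewrite mulmx_suml mulmx_sumr; apply: eq_bigr => i _.
by rewrite -scalemxAl -scalemxAr (pow_comm _ h).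
Qed.

Lemma tr_exp m (A : 'M[algC]_m) i : (A ^+ i)^T = A^T ^+ i.
Proof.
elim: i => [|i IH]; first by rewrite !expr0 trmx1.
by rewrite exprS exprSr !mulE trmx_mul IH.
Qed.

Lemma Bt n (alpha : 'I_n -> algC) : (Bmat alpha)^T = \sum_i alpha i *: (Amat n)^T ^+ i.
Proof.
rewrite /Bmat linear_sum; apply: eq_bigr => i _; by rewrite linearZ /= tr_exp.
Qed.

Lemma JAtp n (v : 'cV[algC]_(n + n)) i : Jmat ((Amat n)^T ^+ i *m v) = Jmat v *m Amat n ^+ i.
Proof.
elim: i v => [|i IH] v; first by rewrite !expr0 mul1mx mulmx1.
by rewrite exprSr mulE -mulmxA IH JAt exprS mulE mulmxA.
Qed.

Lemma JBt n (alpha : 'I_n -> algC) (v : 'cV[algC]_(n + n)) :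
  Jmat ((Bmat alpha)^T *m v) = Jmat v *m Bmat alpha.
Proof.
rewrite Bt mulmx_suml Jmat_sum /Bmat mulmx_sumr; apply: eq_bigr => i _.
by rewrite -scalemxAl JmatZ JAtp scalemxAr.
Qed.

Lemma sq_comm m (X Y : 'M[algC]_m) : X *m Y = Y *m X -> Y *m Y = 1%:M ->
  (Y *m X) *m (Y *m X) = X *m X.
Proof.
move=> h hY; by rewrite mulmxA -(mulmxA Y X Y) h mulmxA hY mul1mx.
Qed.

Lemma jacE n (M : 'M[algC]_(n + n)) x : hamvf_jac M x = Lm (M *m x) + Jmat x *m M.
Proof. by []. Qed.

Theorem mainTheorem17 (n : nat) (hn : (2 <= n)%N)
  (H : 'M[algC]_(n + n)) (alpha : 'I_n -> algC)
  (hH : admissible H)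
  (hB : Bmat alpha *m Bmat alpha = 1%:M)
  (x : 'cV[algC]_(n + n)) (hx : realvec x) :
  let K := Bmat alpha *m H in
  let f := hamvf H x in
  let g := hamvf K x in
  let f' := hamvf_jac H x in
  let g' := hamvf_jac K x in
  [/\ g' *m g = f' *m f,
      g' *m g' = f' *m f',
      Jmat x *m H *m (Jmat x *m K) = Jmat x *m K *m (Jmat x *m H),
      (Jmat x *m H) *m (Jmat x *m H) = (Jmat x *m K) *m (Jmat x *m K) &
      (H *m Jmat x) *m (H *m Jmat x) = (K *m Jmat x) *m (K *m Jmat x)].
Proof.
move=> K f g f' g'.
case: hH => _ [_ hAH].
set B := Bmat alpha.
have F1 : forall v, B^T *m Jmat v = Jmat v *m B.
  by move=> v; rewrite /B Bt /Bmat (sum_comm _ (AtJ v)).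
have F2 : forall v, Jmat (B^T *m v) = Jmat v *m B by move=> v; exact: JBt.
have F3 : B *m H = H *m B^T by rewrite /B Bt /Bmat (sum_comm _ hAH).
have F4 : B^T *m B^T = 1%:M by rewrite -trmx_mul hB trmx1.
have G0 : forall w, Lm w *m B^T = B^T *m Lm w.
  move=> w; apply: mx_ext => v.
  by rewrite -mulmxA LmE F2 -[RHS]mulmxA LmE [RHS]mulmxA F1.
have G1 : forall w, Lm (B *m w) = B^T *m Lm w.
  move=> w; apply: mx_ext => v.
  by rewrite LmE -mulmxA LmE mulmxA -F1 mulmxA.
have JK : Jmat x *m K = B^T *m (Jmat x *m H) by rewrite /K mulmxA -F1 mulmxA.
have eg : g = B^T *m f by rewrite /g /f /hamvf JK !mulmxA.
have eg' : g' = B^T *m f'.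
  by rewrite /g' /f' !jacE /K -mulmxA G1 JK mulmxDr.
have D : Jmat x *m H *m B^T = B^T *m (Jmat x *m H).
  by rewrite -mulmxA -F3 mulmxA -F1 mulmxA.
have C : f' *m B^T = B^T *m f'.
  by rewrite /f' jacE mulmxDl mulmxDr G0 D.
have E : H *m Jmat x *m B = B *m (H *m Jmat x).
  by rewrite -mulmxA -F1 mulmxA -F3 mulmxA.
split.
- by rewrite eg eg' mulmxA -(mulmxA _ f') C mulmxA F4 mul1mx.
- by rewrite eg' mulmxA -(mulmxA _ f') C mulmxA F4 mul1mx.
- by rewrite JK mulmxA D.
- by rewrite JK [RHS]sq_comm.
- by rewrite /K -[B *m H *m _]mulmxA [RHS]sq_comm.
Qed.
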